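(* Let $k\geq 2$ and let $(\Sigma_k,\sigma)$ be the full one-sided shift on $k$ symbols. Then the set $Rec(\Sigma_k)\setminus BR(\Sigma_k)$ is dense in $\Sigma_k$ and contains an uncountable DC1-scrambled subset.
   Context: $\Sigma_k=\{0,1,\dots,k-1\}^{\mathbb{N}}$ with metric $d(x,y)=\sum_{n\ge1}\delta(x_n,y_n)/2^n$ (where $\delta(a,b)=0$ if $a=b$ and $1$ otherwise) and shift $\sigma(x_1x_2x_3\dots)=(x_2x_3\dots)$. For a point $x$ and open set $U$, $N(x,U)=\{n\ge1: \sigma^n(x)\in U\}$; $B_\varepsilon(x)$ is the open $\varepsilon$-ball. For $S\subseteq\mathbb{N}$, the Banach upper density is $B^*(S)=\limsup_{|I|\to\infty}|S\cap I|/|I|$ over finite intervals of consecutive integers $I$. A point $x$ is recurrent ($x\in Rec$) if $N(x,B_\varepsilon(x))\neq\emptyset$ for every $\varepsilon>0$, and Banach recurrent ($x\in BR$) if $B^*(N(x,B_\varepsilon(x)))>0$ for every $\varepsilon>0$. For $x,y$ and $t\in\mathbb{R}$, $\Phi^{(n)}_{xy}(t)=\frac1n|\{0\le i<n: d(\sigma^i x,\sigma^i y)<t\}|$, $\Phi_{xy}=\liminf_n\Phi^{(n)}_{xy}$, $\Phi^*_{xy}=\limsup_n\Phi^{(n)}_{xy}$. A pair $(x,y)$ is DC1 if $\Phi_{xy}(s)=0$ for some $s>0$ and $\Phi^*_{xy}(t)=1$ for all $t>0$; a set with at least two points is DC1-scrambled if every pair of distinct points in it is DC1. *)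

(* Defs.v *)
From Stdlib Require Import Reals ClassicalEpsilon.
From Coquelicot Require Import Coquelicot.
From mathcomp Require Import ssreflect ssrbool eqtype ssrnat fintype.

Set Implicit Arguments.
Unset Strict Implicit.

Local Open Scope R_scope.

(* Sigma_k: one-sided sequences; x n is the coordinate x_{n+1} of the paper. *)
Definition Sigma (k : nat) : Type := nat -> 'I_k.

Definition delta {k : nat} (a b : 'I_k) : R := if a == b then 0 else 1.

Definition dist {k : nat} (x y : Sigma k) : R :=
  Series (fun n => delta (x n) (y n) / 2 ^ (S n)).

Definition shift {k : nat} (x : Sigma k) : Sigma k := fun m => x (S m).
Definition shiftn {k : nat} (n : nat) (x : Sigma k) : Sigma k :=
  fun m => x (m + n)%nat.

Definition ball {k : nat} (x : Sigma k) (eps : R) : Sigma k -> Prop :=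
  fun y => dist x y < eps.

Definition Nset {k : nat} (x : Sigma k) (U : Sigma k -> Prop) : nat -> Prop :=
  fun n => (1 <= n)%nat /\ U (shiftn n x).

Definition ind (P : nat -> Prop) (i : nat) : nat :=
  if excluded_middle_informative (P i) then 1%nat else 0%nat.

Fixpoint count_int (P : nat -> Prop) (a m : nat) : nat :=
  match m with
  | O => O
  | S m' => (ind P (a + m') + count_int P a m')%nat
  end.

Definition sup_dens (P : nat -> Prop) (L : nat) : Rbar :=
  Lub_Rbar (fun r => exists a m : nat, (L <= m)%nat /\ (0 < m)%nat /\
                       r = INR (count_int P a m) / INR m).

Definition banach_upper (P : nat -> Prop) : Rbar :=
  Lim_seq (fun L => real (sup_dens P L)).

Definition Rec {k : nat} (x : Sigma k) : Prop :=
  forall eps, 0 < eps -> exists n, Nset x (ball x eps) n.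

Definition BR {k : nat} (x : Sigma k) : Prop :=
  forall eps, 0 < eps -> Rbar_lt (Rbar.Finite 0) (banach_upper (Nset x (ball x eps))).

Definition Phin {k : nat} (x y : Sigma k) (t : R) (n : nat) : R :=
  INR (count_int (fun i => dist (shiftn i x) (shiftn i y) < t) 0 n) / INR n.

Definition DC1_pair {k : nat} (x y : Sigma k) : Prop :=
  (exists s, 0 < s /\ LimInf_seq (Phin x y s) = Rbar.Finite 0) /\
  (forall t, 0 < t -> LimSup_seq (Phin x y t) = Rbar.Finite 1).

Definition DC1_scrambled {k : nat} (D : Sigma k -> Prop) : Prop :=
  (exists x y, D x /\ D y /\ x <> y) /\
  (forall x y, D x -> D y -> x <> y -> DC1_pair x y).

Definition uncountable {k : nat} (D : Sigma k -> Prop) : Prop :=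
  ~ (exists f : Sigma k -> nat,
       forall x y, D x -> D y -> f x = f y -> x = y).

Definition dense {k : nat} (A : Sigma k -> Prop) : Prop :=
  forall x eps, 0 < eps -> exists y, A y /\ dist x y < eps.

(* Main.v *)
Require Import Defs.
From Stdlib Require Import Reals Lra Lia ClassicalEpsilon Classical FunctionalExtensionality.
From Coquelicot Require Import Coquelicot.
From mathcomp Require Import ssreflect ssrbool eqtype ssrnat fintype.
From mathcomp Require Import div zify.
Import Defs.

Local Open Scope R_scope.

Lemma delta_bounds {k} (a b : 'I_k) : 0 <= delta a b <= 1.
Proof. rewrite /delta; case: (a == b); lra. Qed.

Lemma term_bounds {k} (a b : 'I_k) n :
  0 <= delta a b / 2 ^ (S n) <= / 2 ^ (S n).
Proof.
  have h1 := delta_bounds a b.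
  have hp : 0 < 2 ^ (S n) by apply pow_lt; lra.
  have hi : 0 < / 2 ^ (S n) by apply Rinv_0_lt_compat.
  unfold Rdiv; split; [apply Rmult_le_pos; lra|].
  rewrite -{2}(Rmult_1_l (/ 2 ^ (S n))). apply Rmult_le_compat_r; lra.
Qed.

Lemma inv_pow_le n : / 2 ^ (S n) <= (/2) ^ n.
Proof.
  rewrite pow_inv. apply Rinv_le_contravar; first by apply pow_lt; lra.
  simpl. have : 0 < 2 ^ n by apply pow_lt; lra. lra.
Qed.

Lemma ex_geom : ex_series (fun n => (/2) ^ n).
Proof. eexists; apply is_series_geom; rewrite Rabs_pos_eq; lra. Qed.

Lemma ex_dist {k} (x y : Sigma k) :
  ex_series (fun n => delta (x n) (y n) / 2 ^ (S n)).
Proof.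
  apply: (ex_series_le _ (fun n => (/2)^n)); last exact ex_geom.
  move=> n. have := term_bounds (x n) (y n) n. rewrite /norm /= /abs /=.
  move=> h. have := inv_pow_le n. rewrite Rabs_pos_eq; simpl in *; lra.
Qed.

Lemma Series_zero : Series (fun _ => 0) = 0.
Proof.
  rewrite -(Series_ext (fun n => 0 * 0)); last by move=> n; ring.
  rewrite Series_scal_l; ring.
Qed.

Lemma Series_nonneg (a : nat -> R) : (forall n, 0 <= a n) -> ex_series a -> 0 <= Series a.
Proof.
  move=> h he. rewrite -Series_zero. apply Series_le => // n. split; [lra|apply h].
Qed.

Lemma dist_ge_term {k} (x y : Sigma k) i : x i <> y i -> / 2 ^ (S i) <= dist x y.
Proof.
  move=> hne. rewrite /dist (Series_incr_n _ (S i)); [|lia|apply ex_dist].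
  have hpos : forall n, 0 <= delta (x n) (y n) / 2 ^ (S n)
    by move=> n; have := term_bounds (x n) (y n) n; lra.
  have hs : delta (x i) (y i) / 2 ^ (S i) <= sum_f_R0 (fun n => delta (x n) (y n) / 2 ^ (S n)) (Init.Nat.pred (S i)).
  { rewrite [Init.Nat.pred _]/=. case: i hne => [|i] hne; first by simpl; lra.
    set f := (fun n => _). change (f (S i) <= sum_f_R0 f i + f (S i)).
    have : 0 <= sum_f_R0 f i by apply cond_pos_sum => n; apply hpos.
    lra. }
  have hd : delta (x i) (y i) = 1.
  { rewrite /delta. case: eqP => //. }
  have e : delta (x i) (y i) / 2 ^ (S i) = / 2 ^ (S i) by rewrite hd; unfold Rdiv; ring.
  apply Rle_trans with (sum_f_R0 (fun n => delta (x n) (y n) / 2 ^ (S n)) (Init.Nat.pred (S i))); first lra.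
  rewrite -{1}(Rplus_0_r (sum_f_R0 _ _)). apply Rplus_le_compat_l.
  apply Series_nonneg; first by move=> n; exact: hpos.
  apply (ex_series_incr_n (fun n => delta (x n) (y n) / 2 ^ (S n)) (S i)).
  apply ex_dist.
Qed.

Lemma Series_geom_half : Series (fun n => (/2) ^ n) = 2.
Proof.
  rewrite (is_series_unique _ (/ (1 - /2))); first field.
  apply is_series_geom; rewrite Rabs_pos_eq; lra.
Qed.

Lemma dist_le_pow {k} (x y : Sigma k) T :
  (forall i, (i < T)%nat -> x i = y i) -> dist x y <= / 2 ^ T.
Proof.
  move=> h. rewrite /dist (Series_incr_n_aux _ T); last first.
  { move=> i hi. rewrite h; last by lia. rewrite /delta eqxx. unfold Rdiv; ring. }
  apply Rle_trans with (Series (fun n => (/2)^(S T) * (/2)^n)).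
  - apply Series_le; last first.
    { apply: ex_series_scal_l. apply ex_geom. }
    move=> n. have := term_bounds (x (T + n)%nat) (y (T + n)%nat) (T + n).
    rewrite -pow_add -pow_inv. 
    have -> : (S T + n = S (T + n))%coq_nat by lia. done.
  - rewrite Series_scal_l Series_geom_half pow_inv /=.
    have : 0 < 2 ^ T by apply pow_lt; lra.
    move=> h2. right. field. lra.
Qed.

Lemma dist_lt_agree {k} (x y : Sigma k) T :
  dist x y < / 2 ^ T -> forall i, (i < T)%nat -> x i = y i.
Proof.
  move=> h i hi. case: (x i =P y i) => // hne. exfalso.
  have := dist_ge_term x y i hne.
  have : / 2 ^ T <= / 2 ^ (S i).
  { apply Rinv_le_contravar; first by apply pow_lt; lra.
    apply Rle_pow; [lra| lia]. }
  lra.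
Qed.

Lemma small_pow eps : 0 < eps -> exists T, / 2 ^ T < eps.
Proof.
  move=> he.
  have hg : is_lim_seq (fun n => (/2) ^ n) 0.
  { apply is_lim_seq_geom. rewrite Rabs_pos_eq; lra. }
  move/is_lim_seq_spec: hg => /(_ (mkposreal eps he)) [T hT].
  exists T. have := hT T (Nat.le_refl T). rewrite Rminus_0_r Rabs_pos_eq.
  - rewrite pow_inv /=. done.
  - apply pow_le; lra.
Qed.

Lemma small_inv d : 0 < d -> exists j, 2 / INR (S j) < d.
Proof.
  move=> hd. move/is_lim_seq_spec: is_lim_seq_INR => /(_ (2 / d)) [j hj].
  exists j. have := hj (S j) ltac:(lia). move=> h.
  have hj0 : 0 < INR (S j) by apply lt_0_INR; lia.
  apply (Rmult_lt_reg_r (INR (S j))) => //. unfold Rdiv. rewrite Rmult_assoc Rinv_l; last lra.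
  have : 2 / d * d < INR (S j) * d by apply Rmult_lt_compat_r.
  have -> : 2 / d * d = 2 by field; lra. lra.
Qed.

Lemma real_le_of_lub (E : R -> Prop) d : 0 <= d -> (forall r, E r -> r <= d) ->
  real (Lub_Rbar E) <= d.
Proof.
  move=> hd hE. have [_ hl] := Lub_Rbar_correct E.
  have : Rbar_le (Lub_Rbar E) (Rbar.Finite d) by apply hl => r hr; apply hE.
  case: (Lub_Rbar E) => //=.
Qed.

Local Open Scope nat_scope.

Lemma ind_le1 P i : ind P i <= 1.
Proof. rewrite /ind; case: excluded_middle_informative => _ //. Qed.

Lemma ind_true (P : nat -> Prop) i : P i -> ind P i = 1.
Proof. rewrite /ind; case: excluded_middle_informative => //. Qed.

Lemma ind_false (P : nat -> Prop) i : ~ P i -> ind P i = 0.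
Proof. rewrite /ind; case: excluded_middle_informative => //. Qed.

Lemma count_le P a m : count_int P a m <= m.
Proof. elim: m => [|m IH] //=. have := ind_le1 P (a + m). lia. Qed.

Lemma count_add P a m1 m2 :
  count_int P a (m1 + m2) = count_int P a m1 + count_int P (a + m1) m2.
Proof.
  elim: m2 => [|m2 IH]; first by rewrite addn0 /= addn0.
  rewrite addnS /= IH. have -> : a + (m1 + m2) = a + m1 + m2 by lia. lia.
Qed.

Lemma count_mono (P Q : nat -> Prop) a b m :
  (forall r, r < m -> P (a + r) -> Q (b + r)) -> count_int P a m <= count_int Q b m.
Proof.
  elim: m => [|m IH] h //=.
  have h1 : count_int P a m <= count_int Q b m by apply IH => r hr; apply h; lia.
  rewrite /ind. case: excluded_middle_informative => hp /=;
  case: excluded_middle_informative => hq /=; try lia.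
  exfalso; apply hq, h => //.
Qed.

Lemma count_eq (P Q : nat -> Prop) a b m :
  (forall r, r < m -> (P (a + r) <-> Q (b + r))) -> count_int P a m = count_int Q b m.
Proof.
  move=> h. apply/eqP; rewrite eqn_leq; apply/andP; split; apply count_mono => r hr; by case: (h r hr).
Qed.

Lemma count_zero (P : nat -> Prop) a m :
  (forall r, r < m -> ~ P (a + r)) -> count_int P a m = 0.
Proof.
  elim: m => [|m IH] h //=. rewrite ind_false; last by apply h.
  rewrite IH // => r hr; apply h; lia.
Qed.

Lemma count_full (P : nat -> Prop) a m :
  (forall r, r < m -> P (a + r)) -> count_int P a m = m.
Proof.
  elim: m => [|m IH] h //=. rewrite ind_true; last by apply h.
  rewrite IH // => r hr; apply h; lia.
Qed.

Lemma count_len P a m1 m2 : m1 <= m2 -> count_int P a m1 <= count_int P a m2.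
Proof.
  move=> h. have -> : m2 = m1 + (m2 - m1) by lia. rewrite count_add. lia.
Qed.

Section Construction.
Variable k : nat.
Variables zero one : 'I_k.
Hypothesis hzo : zero <> one.
Variable N : nat.
Variable w : Sigma k.
Variable z : nat -> bool.

Fixpoint L (j : nat) : nat := match j with 0 => N + 2 | S j' => (j' + 3) * L j' end.
Definition P (j : nat) : nat := (j + 2) * L j.
Definition a0 (n : nat) : 'I_k := if n < N then w n else one.
Definition hidx (m : nat) : nat := m - (Nat.sqrt m) ^ 2.
Definition bit (j : nat) : bool := odd j && z (hidx j./2).
Definition fill (j n : nat) : 'I_k :=
  if [&& bit j, odd (n - L j) & n.+1 < P j] then one else zero.
Fixpoint Y (j : nat) : Sigma k :=
  match j with
  | 0 => a0
  | S j' => fun n => if n < L j' then Y j' n else if n < P j' then fill j' n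
                     else Y j' (n - P j')
  end.
Definition yseq : Sigma k := fun n => Y n n.

Lemma L_S j : L (S j) = P j + L j.
Proof. rewrite /P /=. lia. Qed.

Lemma L_ge j : j + 2 <= L j.
Proof. elim: j => [|j IH] /=; lia. Qed.

Lemma P_gt j : L j < P j.
Proof. have := L_ge j. rewrite /P. nia. Qed.

Lemma L_mono j j' : j <= j' -> L j <= L j'.
Proof.
  move=> h. elim: j' h => [|j' IH] h; first by have -> : j = 0 by lia.
  case: (ltnP j (S j')) => h2.
  - have := IH ltac:(lia). rewrite L_S. lia.
  - have -> : j = S j' by lia. done.
Qed.

Lemma Y_stable j j' n : n < L j -> j <= j' -> Y j' n = Y j n.
Proof.
  move=> hn. elim: j' => [|j' IH] h; first by have -> : j = 0 by lia.
  case: (ltnP j (S j')) => h2.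
  - rewrite /= ifT; first by apply IH; lia.
    have := L_mono j j' ltac:(lia). lia.
  - have -> : j = S j' by lia. done.
Qed.

Lemma y_Y j n : n < L j -> yseq n = Y j n.
Proof.
  move=> hn. rewrite /yseq. have := L_ge n => hl.
  case: (leqP j n) => h.
  - apply Y_stable; lia.
  - symmetry. apply Y_stable; lia.
Qed.

Lemma y_prefix n : n < L 0 -> yseq n = a0 n.
Proof. move=> h. by rewrite (y_Y 0). Qed.

Lemma y_fill j n : L j <= n < P j -> yseq n = fill j n.
Proof.
  move=> h. rewrite (y_Y (S j)); last by rewrite L_S; lia.
  rewrite /= ifF; last by lia. rewrite ifT //; lia.
Qed.

Lemma y_copy j n : n < L j -> yseq (P j + n) = yseq n.
Proof.
  move=> h. rewrite (y_Y (S j)); last by rewrite L_S; lia.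
  have := P_gt j => hp.
  rewrite /= ifF; last by lia. rewrite ifF; last by lia.
  rewrite (y_Y j) //. by have -> : P j + n - P j = n by lia.
Qed.

Lemma y_rec : Rec yseq.
Proof.
  move=> eps he. have [T hT] := small_pow eps he.
  exists (P T). split; first by have := P_gt T; lia.
  rewrite /Defs.ball. apply: Rle_lt_trans; last exact hT.
  apply: Rle_trans; first apply (dist_le_pow yseq (shiftn (P T) yseq) (L T)).
  - move=> i hi. rewrite /shiftn addnC y_copy //.
  - apply Rinv_le_contravar; first by apply pow_lt; lra.
    apply Rle_pow; [lra|]. have := L_ge T. lia.
Qed.

Definition G (q : nat) : Prop := yseq q = one /\ yseq (q + 1) = one.

Lemma fill_L j : fill j (L j) = zero.
Proof. by rewrite /fill subnn /= andbF. Qed.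

Lemma G1 J q : L J <= q + 1 -> q < P J -> ~ G q.
Proof.
  move=> h1 h2 [g1 g2]. have hP := P_gt J.
  case: (ltnP q (L J)) => h3.
  - have e : q + 1 = L J by lia. rewrite e (y_fill J) ?fill_L in g2; last by lia.
    by apply hzo.
  - rewrite (y_fill J) in g1; last by lia.
    move: g1; rewrite /fill. case: (q.+1 < P J) / ltnP => h4; last first.
    { rewrite !andbF => e; by apply hzo. }
    rewrite (y_fill J) in g2; last by lia.
    move: g2; rewrite /fill.
    have -> : q + 1 - L J = (q - L J).+1 by lia.
    rewrite oddS.
    case: (bit J); case: (odd (q - L J)) => /=; rewrite ?andbF => e1 e2 //;
    try (by apply hzo); by apply hzo.
Qed.

Lemma G2 J r : r < L J -> (G (P J + r) <-> G r).
Proof.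
  move=> hr. case: (ltnP (r + 1) (L J)) => h.
  - rewrite /G -addnA !y_copy //.
  - split => hg.
    + exfalso. case: hg => _. rewrite -addnA.
      have -> : P J + (r + 1) = L (S J) by rewrite L_S; lia.
      rewrite (y_fill (S J)) ?fill_L; last by have := P_gt (S J); lia.
      by apply hzo.
    + exfalso. apply: (G1 J r); try lia; last exact hg.
      have := P_gt J; lia.
Qed.
Lemma G_shift J c m : c + m <= L J -> count_int G (P J + c) m = count_int G c m.
Proof.
  move=> h. apply count_eq => r hr. rewrite -addnA. apply G2. lia.
Qed.

Lemma G_fillzero J c m : L J <= c -> c + m <= P J -> count_int G c m = 0.
Proof.
  move=> h1 h2. apply count_zero => r hr. apply (G1 J); lia.
Qed.

Lemma G3 J : count_int G 0 (L J) <= 2 ^ J * L 0.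
Proof.
  elim: J => [|J IH]; first by rewrite expn0 mul1n; apply count_le.
  have hP := P_gt J.
  have -> : L (S J) = L J + (P J - L J) + L J by rewrite L_S; lia.
  rewrite !count_add !add0n.
  rewrite (G_fillzero J (L J) (P J - L J)); [|lia|lia].
  have -> : L J + (P J - L J) = P J + 0 by lia.
  rewrite G_shift; last by lia.
  rewrite expnS. lia.
Qed.

Definition mlen (j : nat) : nat := P j - L j.

Lemma mlen_mono j J : j <= J -> mlen j <= mlen J.
Proof.
  move=> h. rewrite /mlen /P.
  have := L_mono j J h. nia.
Qed.

Lemma G4 j J : j <= J -> forall b m, b + m <= L J -> m <= mlen j ->
  count_int G b m <= 2 ^ j * L 0.
Proof.
  move=> hjJ. elim: J hjJ => [|J IH] hjJ b m h1 h2.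
  - have e : j = 0 by lia. subst j.
    apply: leq_trans; last apply (G3 0).
    have -> : L 0 = b + m + (L 0 - (b + m)) by lia.
    rewrite count_add. have := count_le G 0 b.
    have : count_int G 0 (b + m) = count_int G 0 b + count_int G b m.
    { rewrite count_add add0n. done. }
    lia.
  - case: (ltnP j (S J)) => hj; last first.
    { have e : j = S J by lia. subst j.
      apply: leq_trans; last apply (G3 (S J)).
      have -> : L (S J) = b + m + (L (S J) - (b + m)) by lia.
      rewrite count_add.
      have : count_int G 0 (b + m) = count_int G 0 b + count_int G b m.
      { rewrite count_add add0n. done. }
      lia. }
    have hm := mlen_mono j J ltac:(lia).
    have hP := P_gt J.
    move: hm; rewrite /mlen => hm.
    have hLS := L_S J.
    case: (ltnP b (L J)) => hb.
    +
      case: (leqP (b + m) (L J)) => hbm.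
      * apply IH => //; lia.
      * have -> : m = (L J - b) + (m - (L J - b)) by lia.
        rewrite count_add (G_fillzero J (b + (L J - b)) (m - (L J - b))); [|lia|rewrite /mlen in h2; lia].
        rewrite addn0. apply IH; rewrite /mlen in h2 *; lia.
    + case: (ltnP b (P J)) => hb2.
      * case: (leqP (b + m) (P J)) => hbm.
        { rewrite (G_fillzero J b m) //. }
        have -> : m = (P J - b) + (m - (P J - b)) by lia.
        rewrite count_add (G_fillzero J b (P J - b)); [|lia|lia].
        have -> : b + (P J - b) = P J + 0 by lia.
        rewrite G_shift; last by lia.
        apply IH; rewrite /mlen in h2 *; lia.
      * have -> : b = P J + (b - P J) by lia.
        rewrite G_shift; last by lia.
        apply IH; rewrite /mlen in h2 *; lia.
Qed.

Lemma G5 j b m : m <= mlen j -> count_int G b m <= 2 ^ j * L 0.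
Proof.
  move=> h. apply (G4 j (j + b + m)); first lia; last done.
  have := L_ge (j + b + m). lia.
Qed.

Lemma G6 j q : forall b r, r <= mlen j -> count_int G b (q * mlen j + r) <= q.+1 * (2 ^ j * L 0).
Proof.
  elim: q => [|q IH] b r hr.
  - rewrite mul0n add0n mul1n. by apply G5.
  - have -> : q.+1 * mlen j + r = mlen j + (q * mlen j + r) by rewrite mulSn; lia.
    rewrite count_add. have := G5 j b (mlen j) (leqnn _).
    have := IH (b + mlen j) r hr. rewrite (mulSn q.+1). lia.
Qed.

Lemma L_pow j : 2 ^ j * L 0 <= L j.
Proof.
  elim: j => [|j IH]; first by rewrite expn0 mul1n.
  rewrite expnS -mulnA. have : 2 * L j <= (j + 3) * L j by apply leq_mul; lia. change (L j.+1) with ((j + 3) * L j). lia.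
Qed.

Lemma G7 j b M : mlen j <= M -> count_int G b M * j.+1 <= 2 * M.
Proof.
  move=> hM.
  have hm : 0 < mlen j by rewrite /mlen; have := P_gt j; lia.
  have hdec : M = (M %/ mlen j) * mlen j + M %% mlen j by apply divn_eq.
  set q := M %/ mlen j in hdec. set r := M %% mlen j in hdec.
  have hr : r < mlen j by rewrite /r ltn_mod.
  have hq : 1 <= q.
  { case: (posnP q) => // e. rewrite e mul0n add0n in hdec. lia. }
  have hc := G6 j q b r ltac:(lia).
  rewrite -hdec in hc.
  have hC := L_pow j.
  have hml : mlen j = j.+1 * L j by rewrite /mlen /P; lia.
  set C := 2 ^ j * L 0 in hc hC.
  have hC0 : 0 < C by rewrite /C; have := L_ge 0; have := expn_gt0 2 j; nia.
  (* count <= (q+1) C <= 2 q C ; q * (j+1) * L j <= M ; C <= L j *)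
  have h1 : count_int G b M <= 2 * q * C by nia.
  have h2 : q * (j.+1 * L j) <= M by rewrite -hml; lia.
  nia.
Qed.

Lemma ret_G p : Nset yseq (Defs.ball yseq (/ 2 ^ (N + 2))) p -> G (p + N).
Proof.
  move=> [hp hb]. have ha := dist_lt_agree _ _ _ hb.
  have h0 : yseq N = one by rewrite y_prefix /a0 ?ltnn //=; lia.
  have h1 : yseq (N + 1) = one.
  { rewrite y_prefix /a0 /=; last lia. rewrite ifF //. lia. }
  split.
  - rewrite -h0 (ha N); last lia. by rewrite /shiftn addnC.
  - rewrite -h1 (ha (N + 1)); last lia. rewrite /shiftn. f_equal. lia.
Qed.

Lemma y_notBR : ~ BR yseq.
Proof.
  move=> hBR.
  have he : (0 < / 2 ^ (N + 2))%R by apply Rinv_0_lt_compat, pow_lt; lra.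
  have hb := hBR _ he.
  set Ret := Nset yseq (Defs.ball yseq (/ 2 ^ (N + 2))) in hb.
  have key : forall d, (0 < d)%R -> Rbar_le (banach_upper Ret) (Rbar.Finite d).
  { move=> d hd. have [j hj] := small_inv d hd.
    rewrite /banach_upper -(Lim_seq_const d). apply Lim_seq_le_loc.
    exists (mlen j) => Lm hLm. rewrite /sup_dens. apply real_le_of_lub; first lra.
    move=> r [a [m [h1 [h2 ->]]]].
    have hc1 : count_int Ret a m <= count_int G (a + N) m.
    { apply count_mono => q hq hr. have := ret_G _ hr. by rewrite -addnA (addnC q N) addnA. }
    have hc2 := G7 j (a + N) m ltac:(lia).
    have hc : (count_int Ret a m * S j <= 2 * m)%coq_nat.
    { have : count_int Ret a m * j.+1 <= count_int G (a + N) m * j.+1 by apply leq_mul. lia. }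
    apply le_INR in hc. rewrite !mult_INR in hc.
    have hm0 : (0 < INR m)%R by apply lt_0_INR; lia.
    have hj0 : (0 < INR (S j))%R by apply lt_0_INR; lia.
    apply Rlt_le, Rle_lt_trans with (2 / INR (S j))%R; last done.
    apply (Rmult_le_reg_r (INR m * INR (S j))); first by apply Rmult_lt_0_compat.
    have -> : (INR (count_int Ret a m) / INR m * (INR m * INR (S j)) = INR (count_int Ret a m) * INR (S j))%R
      by field; lra.
    have -> : (2 / INR (S j) * (INR m * INR (S j)) = 2 * INR m)%R by field; lra.
    have e2 : INR 2 = 2%R by simpl; lra. rewrite e2 in hc.
    done. }
  move: hb. case e : (banach_upper Ret) => [x| |] //= hx.
  - have := key (x / 2)%R ltac:(lra). rewrite e /=. lra.
  - have := key 1%R ltac:(lra). by rewrite e.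
Qed.

End Construction.

Lemma ratio_small c n j0 eps : 0 < n -> (c * S j0 <= 2 * n)%coq_nat ->
  (2 / INR (S j0) < eps)%R -> (INR c / INR n < eps)%R.
Proof.
  move=> hn hc hj. apply le_INR in hc. rewrite !mult_INR in hc.
  have hm0 : (0 < INR n)%R by apply lt_0_INR; lia.
  have hj0 : (0 < INR (S j0))%R by apply lt_0_INR; lia.
  apply Rle_lt_trans with (2 / INR (S j0))%R; last done.
  apply (Rmult_le_reg_r (INR n * INR (S j0))); first by apply Rmult_lt_0_compat.
  have -> : (INR c / INR n * (INR n * INR (S j0)) = INR c * INR (S j0))%R by field; lra.
  have -> : (2 / INR (S j0) * (INR n * INR (S j0)) = 2 * INR n)%R by field; lra.
  have e2 : INR 2 = 2%R by simpl; lra. rewrite e2 in hc. done.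
Qed.

Lemma Phin_le1 {k} (x y : Sigma k) t n : (Phin x y t n <= 1)%R.
Proof.
  rewrite /Phin. case: n => [|n]; first by rewrite /= /Rdiv Rmult_0_l; lra.
  have hn : (0 < INR n.+1)%R by apply lt_0_INR; lia.
  have h0 : (count_int (fun i => dist (shiftn i x) (shiftn i y) < t)%R 0 n.+1 <= n.+1)%coq_nat.
  { have := count_le (fun i => dist (shiftn i x) (shiftn i y) < t)%R 0 n.+1. lia. }
  have h := le_INR _ _ h0. apply (Rmult_le_reg_r (INR n.+1)) => //.
  rewrite /Rdiv Rmult_assoc Rinv_l; lra.
Qed.

Lemma Phin_ge0 {k} (x y : Sigma k) t n : (0 <= Phin x y t n)%R.
Proof.
  rewrite /Phin. apply Rmult_le_pos; first apply pos_INR.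
  case: n => [|n]; first by rewrite /= Rinv_0; lra.
  apply Rlt_le, Rinv_0_lt_compat, lt_0_INR; lia.
Qed.

Lemma far_levels (i0 M : nat) : exists m, M <= m /\ hidx m = i0.
Proof.
  exists ((M + i0) * (M + i0) + i0). split; first nia.
  rewrite /hidx (Nat.sqrt_unique _ (M + i0)); last by split; nia.
  rewrite -mulnn. lia.
Qed.

Lemma half_odd m : ((2 * m).+1)./2 = m /\ odd (2 * m).+1.
Proof. rewrite mul2n /= uphalf_double odd_double. done. Qed.

Lemma even_bit z m : bit z (2 * m) = false.
Proof. by rewrite /bit mul2n odd_double. Qed.

Section DC.
Variable k : nat.
Variables zero one : 'I_k.
Hypothesis hzo : zero <> one.
Variable N : nat.
Variable w : Sigma k.
Variables z1 z2 : nat -> bool.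

Let y1 := yseq k zero one N w z1.
Let y2 := yseq k zero one N w z2.

Lemma far_dist j i : bit z1 j <> bit z2 j -> L N j <= i -> i + 2 < P N j ->
  ~ (dist (shiftn i y1) (shiftn i y2) < / 2 ^ 2)%R.
Proof.
  move=> hb h1 h2 hd. have ha := dist_lt_agree _ _ _ hd.
  pose q := if odd (i - L N j) then i else i.+1.
  have hq1 : i <= q <= i + 1 by rewrite /q; case: ifP => _; lia.
  have hq2 : odd (q - L N j).
  { rewrite /q. case: ifP => // ho. have -> : i.+1 - L N j = (i - L N j).+1 by lia.
    by rewrite oddS ho. }
  have := ha (q - i) ltac:(lia). rewrite /shiftn.
  have -> : q - i + i = q by lia.
  rewrite /y1 /y2 (y_fill _ _ _ _ _ _ j) ?(y_fill _ _ _ _ _ _ j); try lia.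
  rewrite /fill hq2. have -> : q.+1 < P N j by lia.
  move: hb. case: (bit z1 j); case: (bit z2 j) => //= _ e; apply hzo; by rewrite e.
Qed.

Lemma close_dist j i T : bit z1 j = false -> bit z2 j = false -> L N j <= i -> i + T <= P N j ->
  (dist (shiftn i y1) (shiftn i y2) <= / 2 ^ T)%R.
Proof.
  move=> hb1 hb2 h1 h2. apply dist_le_pow => r hr. rewrite /shiftn /y1 /y2.
  rewrite (y_fill _ _ _ _ _ _ j) ?(y_fill _ _ _ _ _ _ j); try lia.
  by rewrite /fill hb1 hb2.
Qed.

Lemma far_count j : bit z1 j <> bit z2 j ->
  count_int (fun i => dist (shiftn i y1) (shiftn i y2) < / 2 ^ 2)%R 0 (P N j) <= L N j + 2.
Proof.
  move=> hb. have hP := P_gt N j. have hL := L_ge N j.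
  have hP2 : L N j + 2 <= P N j by rewrite /P; nia.
  have -> : P N j = L N j + (P N j - L N j - 2) + 2 by lia.
  rewrite !count_add (count_zero _ (0 + L N j) (P N j - L N j - 2)); last first.
  { move=> r hr. apply (far_dist j) => //; lia. }
  have := count_le (fun i => dist (shiftn i y1) (shiftn i y2) < / 2 ^ 2)%R 0 (L N j).
  have := count_le (fun i => dist (shiftn i y1) (shiftn i y2) < / 2 ^ 2)%R
    (0 + (L N j + (P N j - L N j - 2))) 2.
  lia.
Qed.

Lemma close_count j T t : bit z1 j = false -> bit z2 j = false -> (/ 2 ^ T < t)%R ->
  T + L N j <= P N j ->
  P N j - L N j - T <= count_int (fun i => dist (shiftn i y1) (shiftn i y2) < t)%R 0 (P N j).
Proof.
  move=> hb1 hb2 ht hT.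
  have -> : P N j = L N j + (P N j - L N j - T) + T by lia.
  rewrite !count_add (count_full _ (0 + L N j)); first lia.
  move=> r hr. apply: Rle_lt_trans; last exact ht.
  apply (close_dist j) => //; lia.
Qed.

Lemma dc1 : (exists i0, z1 i0 <> z2 i0) -> DC1_pair y1 y2.
Proof.
  move=> [i0 hi0]. split.
  - exists (/ 2 ^ 2)%R. split; first by apply Rinv_0_lt_compat, pow_lt; lra.
    apply is_LimInf_seq_unique => eps. split.
    + move=> N0. have he := cond_pos eps.
      have [j0 hj0] := small_inv eps he.
      have [m [hm1 hm2]] := far_levels i0 (N0 + j0).
      set j := (2 * m).+1.
      have [hh ho] := half_odd m.
      have hb : bit z1 j <> bit z2 j by rewrite /bit ho hh hm2 /=.
      have hfc := far_count j hb.
      have hL := L_ge N j.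
      exists (P N j). split.
      { rewrite /P. apply/leP. nia. }
      have hPe : P N j = (j + 2) * L N j by [].
      set c := count_int _ 0 (P N j) in hfc.
      have hc2 : c <= 2 * L N j by lia.
      have h3 : c * j0.+1 <= 2 * L N j * j0.+1 by apply leq_mul.
      have h4 : 2 * L N j * j0.+1 <= 2 * L N j * (j + 2) by apply leq_mul; lia.
      rewrite Rplus_0_l /Phin -/c. apply: (ratio_small _ _ j0) => //.
      * rewrite hPe; nia.
      * rewrite hPe. nia.
    + exists 0%nat => n _. have := Phin_ge0 y1 y2 (/ 2 ^ 2) n. have := cond_pos eps. lra.
  - move=> t ht. apply is_LimSup_seq_unique => eps. split.
    + move=> N0. have he := cond_pos eps.
      have [T hT] := small_pow t ht.
      have [j0 hj0] := small_inv eps he.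
      set j := 2 * (N0 + j0 + T).
      have hb := even_bit z1 (N0 + j0 + T).
      have hb' := even_bit z2 (N0 + j0 + T).
      have hL := L_ge N j.
      have hTL : T + L N j <= P N j by rewrite /P; nia.
      have hcc := close_count j T t hb hb' hT hTL.
      set c := count_int _ 0 (P N j) in hcc.
      have hcP : c <= P N j by apply count_le.
      exists (P N j). split.
      { rewrite /P. apply/leP. nia. }
      have hr : (INR (P N j - c)%coq_nat / INR (P N j) < eps)%R.
      { have hPe : P N j = (j + 2) * L N j by [].
        have hc2 : P N j - c <= 2 * L N j by lia.
        have h3 : (P N j - c) * j0.+1 <= 2 * L N j * j0.+1 by apply leq_mul.
        have h4 : 2 * L N j * j0.+1 <= 2 * L N j * (j + 2) by apply leq_mul; lia.
        apply: (ratio_small _ _ j0) => //.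
        - rewrite hPe; nia.
        - rewrite hPe in h3 h4 *. nia. }
      rewrite minus_INR in hr; last by lia.
      have hP0 : (0 < INR (P N j))%R by apply lt_0_INR; rewrite /P; nia.
      rewrite /Phin -/c.
      have : ((INR (P N j) - INR c) / INR (P N j) = 1 - INR c / INR (P N j))%R by field; lra.
      lra.
    + exists 0%nat => n _. have := Phin_le1 y1 y2 t n. have := cond_pos eps. lra.
Qed.

End DC.

Lemma dist_self {k} (x : Sigma k) : (dist x x < / 2 ^ 2)%R.
Proof.
  apply Rle_lt_trans with (/ 2 ^ 3)%R; first by apply dist_le_pow.
  simpl. lra.
Qed.

Lemma y_inj k (zero one : 'I_k) (hzo : zero <> one) N w z1 z2 i0 :
  z1 i0 <> z2 i0 -> yseq k zero one N w z1 <> yseq k zero one N w z2.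
Proof.
  move=> hi e.
  have [m [_ hm2]] := far_levels i0 0.
  set j := (2 * m).+1.
  have [hh ho] := half_odd m.
  have hb : bit z1 j <> bit z2 j by rewrite /bit ho hh hm2 /=.
  have hP := P_gt N j. have hL := L_ge N j.
  have hP2 : L N j + 3 <= P N j by rewrite /P; nia.
  apply: (far_dist k zero one hzo N w z1 z2 j (L N j) hb) => //; first lia.
  rewrite e. apply dist_self.
Qed.

Lemma no_inj : ~ exists g : (nat -> bool) -> nat, forall a b, g a = g b -> a = b.
Proof.
  move=> [g hg].
  pose h := fun n => match excluded_middle_informative (exists z, g z = n) with
                     | left p => proj1_sig (constructive_indefinite_description _ p)
                     | right _ => fun _ : nat => false end.
  pose d := fun i => ~~ h i i.
  have hd : h (g d) = d.
  { rewrite /h. case: excluded_middle_informative => [p|np]; last by exfalso; apply np; exists d.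
    case: (constructive_indefinite_description _ p) => z /= hz. by apply hg. }
  have : d (g d) = ~~ d (g d) by rewrite {1}/d hd.
  by case: (d (g d)).
Qed.

Local Close Scope nat_scope.

Theorem theoremA (k : nat) (hk : (2 <= k)%nat) :
  dense (fun x : Sigma k => Rec x /\ ~ BR x) /\
  exists D : Sigma k -> Prop,
    (forall x, D x -> Rec x /\ ~ BR x) /\ uncountable D /\ DC1_scrambled D.
Proof.
  case: k hk => [|[|k']] hk //.
  pose zero : 'I_k'.+2 := ord0.
  have h1 : (1 < k'.+2)%nat by [].
  pose one : 'I_k'.+2 := Ordinal h1.
  have hzo : zero <> one by move=> e; move: (f_equal (@nat_of_ord _) e).
  split.
  - move=> x eps he. have [T hT] := small_pow eps he.
    exists (yseq _ zero one T x (fun _ => false)). split; first split.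
    + apply y_rec.
    + apply y_notBR => //.
    + apply: Rle_lt_trans; last exact hT. apply dist_le_pow => i hi.
      rewrite y_prefix; last by rewrite /=; lia. by rewrite /a0 hi.
  - pose x0 : Sigma k'.+2 := fun _ => zero.
    exists (fun y => exists z, y = yseq _ zero one 0 x0 z). split; [|split].
    + move=> y [z ->]. split; [apply y_rec | apply y_notBR => //].
    + move=> [f hf]. apply no_inj. exists (fun z => f (yseq _ zero one 0 x0 z)).
      move=> a b e. apply functional_extensionality => i.
      case: (boolP (a i == b i)) => [/eqP //|/eqP hne]. exfalso.
      apply: (y_inj _ zero one hzo 0%nat x0 a b i hne). apply hf => //; [exists a | exists b]; done.
    + split.
      * exists (yseq _ zero one 0 x0 (fun _ => false)), (yseq _ zero one 0 x0 (fun _ => true)).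
        split; [by eexists|split; [by eexists|]]. by apply (y_inj _ zero one hzo 0%nat x0 _ _ 0%nat).
      * move=> y1 y2 [a ->] [b ->] hne. apply dc1 => //.
        apply: NNPP => hall. apply hne. f_equal. apply functional_extensionality => i.
        apply NNPP => hi. apply hall; exists i; done.
Qed.
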